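(* Let $\mathcal T=(S,\Sigma,\kappa)$ be an STS and $B\in\Sigma$. Suppose $\mathcal T$ is globally coarse w.r.t. $B$, i.e., there exists $p>0$ such that for every $s\in S$, either $\mathbb P^{\mathcal T}_{\delta_s}(\mathbf F B)\ge p$ or $\mathbb P^{\mathcal T}_{\delta_s}(\mathbf F B)=0$. Then $\mathcal T$ is decisive with respect to $B$.
   Context: A stochastic transition system (STS) is a triple $\mathcal T=(S,\Sigma,\kappa)$ where $(S,\Sigma)$ is a measurable space and $\kappa:S\times\Sigma\to[0,1]$ is a Markov kernel. $\mathrm{Dist}(S)$: probability distributions on $(S,\Sigma)$; $\delta_s$: Dirac at $s$. $\mathbb P^{\mathcal T}_\mu$ is the probability measure on runs $S^\omega$ induced by initial distribution $\mu$ and $\kappa$. $\mathbf F B$: runs visiting $B$ at some step. $\widetilde B=\{s\in S:\mathbb P^{\mathcal T}_{\delta_s}(\mathbf F B)=0\}$ (assumed measurable). $\mathcal T$ is decisive w.r.t. $B$ if for every $\mu\in\mathrm{Dist}(S)$, $\mathbb P^{\mathcal T}_\mu(\mathbf F B\vee\mathbf F\widetilde B)=1$. *)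

(* Defs.v *)
From HB Require Import structures.
From mathcomp Require Import all_boot all_order all_algebra.
From mathcomp Require Import all_classical all_reals all_analysis.
Set Implicit Arguments. Unset Strict Implicit. Unset Printing Implicit Defensive.
Import Order.TTheory GRing.Theory Num.Theory.
Local Open Scope classical_set_scope.
Local Open Scope ring_scope.

Definition run (S : Type) := nat -> S.

Definition run_display : measure_display -> measure_display.
Proof. exact. Qed.

Section run_measurable.
Context {d : measure_display} {S : measurableType d}.

HB.instance Definition _ := Pointed.on (run S).

Definition run_measurable : set (set (run S)) :=
  <<s \bigcup_(n in [set: nat])
        preimage_set_system [set: run S] (fun r : run S => r n) measurable >>.

Let run_set0 : run_measurable set0.
Proof. exact: sigma_algebra0. Qed.
Let run_setC A : run_measurable A -> run_measurable (~` A).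
Proof. exact: sigma_algebraC. Qed.
Let run_bigcup (F : (set (run S))^nat) : (forall i, run_measurable (F i)) ->
  run_measurable (\bigcup_i (F i)).
Proof. exact: sigma_algebra_bigcup. Qed.

HB.instance Definition _ := @isMeasurable.Build (run_display d)
  (run S) run_measurable run_set0 run_setC run_bigcup.
End run_measurable.

Section sts.
Context {d : measure_display} {S : measurableType d} {R : realType}.
Local Open Scope ereal_scope.

Fixpoint cyl (kappa : R.-pker S ~> S) (As : seq (set S)) (s : S) : \bar R :=
  match As with
  | [::] => 1
  | A :: As' => (\1_A s)%:E * \int[kappa s]_y cyl kappa As' y
  end.

(* P is the probability measure P_mu on runs induced by the initial
   distribution mu and the Markov kernel kappa: it satisfies the
   cylinder-set formula (which determines it uniquely). *)
Definition is_run_measure (kappa : R.-pker S ~> S)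
    (mu : {measure set S -> \bar R}) (P : probability (run S) R) : Prop :=
  forall As : seq (set S), (forall A, A \in As -> measurable A) ->
    P [set r : run S | forall i, (i < size As)%N -> nth setT As i (r i)]
    = \int[mu]_s cyl kappa As s.

Definition Fev (B : set S) : set (run S) := [set r | exists n, B (r n)].

(* B~ = { s | P_{delta_s}(F B) = 0 }, where Pd s is the run measure P_{delta_s} *)
Definition Btilde (Pd : S -> probability (run S) R) (B : set S) : set S :=
  [set s | Pd s (Fev B) = 0].

Definition decisive (kappa : R.-pker S ~> S) (Pd : S -> probability (run S) R)
    (B : set S) : Prop :=
  forall (mu : probability S R) (P : probability (run S) R),
    is_run_measure kappa mu P ->
    P (Fev B `|` Fev (Btilde Pd B)) = 1.

Definition globally_coarse (Pd : S -> probability (run S) R) (B : set S) : Prop :=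
  exists p : R, (0 < p)%R /\
    forall s, p%:E <= Pd s (Fev B) \/ Pd s (Fev B) = 0.
End sts.

(* Main.v *)
Require Import Defs.
From HB Require Import structures.
From mathcomp Require Import all_boot all_order all_algebra.
From mathcomp Require Import all_classical all_reals all_analysis.
From mathcomp Require Import measurable_realfun.
Set Implicit Arguments. Unset Strict Implicit. Unset Printing Implicit Defensive.
Import Order.TTheory GRing.Theory Num.Theory.
Local Open Scope classical_set_scope.
Local Open Scope ring_scope.
Section cylf.
Context {d : measure_display} {S : measurableType d} {R : realType}.
Variable kappa : R.-pker S ~> S.
Local Open Scope ereal_scope.

Fixpoint cylf (As : seq (set S)) (f : S -> \bar R) : S -> \bar R :=
  match As with
  | [::] => f
  | A :: As' => fun s => (\1_A s)%:E * \int[kappa s]_y cylf As' f y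
  end.

Lemma cylf_cat As Bs : cyl kappa (As ++ Bs) = cylf As (cyl kappa Bs).
Proof.
elim: As => [//|A As IH] /=; apply/funext => s; by rewrite IH.
Qed.

Definition allm (As : seq (set S)) := forall A, A \in As -> measurable A.

Lemma allm_cons A As : allm (A :: As) -> measurable A /\ allm As.
Proof.
move=> h; split; first by apply: h; rewrite inE eqxx.
by move=> B BA; apply: h; rewrite inE BA orbT.
Qed.

Lemma indic01 (A : set S) s : (\1_A s : R)%:E = 1 \/ (\1_A s)%:E = 0 :> \bar R.
Proof. rewrite indicE; case: (s \in A); [left|right] => //. Qed.

Lemma cylf_ge0 As (f : S -> \bar R) : (forall x, 0 <= f x) -> forall x, 0 <= cylf As f x.
Proof.
move=> f0; elim: As => [//|A As IH] x /=.
apply: mule_ge0; first by rewrite lee_fin.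
by apply: integral_ge0 => y _; exact: IH.
Qed.

Lemma cylf_meas As (f : S -> \bar R) : allm As -> measurable_fun [set: S] f ->
  (forall x, 0 <= f x) -> measurable_fun [set: S] (cylf As f).
Proof.
move=> + mf f0; elim: As => [//|A As IH] /allm_cons [mA mAs] /=.
apply: emeasurable_funM.
  by apply/measurable_EFinP; exact: measurable_indic.
apply: measurable_fun_integral_kernel.
- by move=> U mU; exact: measurable_kernel.
- exact: cylf_ge0.
- exact: IH.
Qed.

Lemma cylf_le As (f g : S -> \bar R) : allm As -> measurable_fun [set: S] f -> measurable_fun [set: S] g ->
  (forall x, 0 <= f x) -> (forall x, f x <= g x) ->
  forall x, cylf As f x <= cylf As g x.
Proof.
move=> + mf mg f0 fg; elim: As => [//|A As IH] /allm_cons [mA mAs] x /=.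
have g0 y : 0 <= g y by apply: le_trans (fg y).
apply: lee_wpmul2l; first by rewrite lee_fin.
apply: ge0_le_integral => //.
- by move=> y _; exact: cylf_ge0.
- exact: cylf_meas.
- exact: cylf_meas.
- by move=> y _; exact: IH.
Qed.

Lemma cylf_add As (f g : S -> \bar R) : allm As -> measurable_fun [set: S] f -> measurable_fun [set: S] g ->
  (forall x, 0 <= f x) -> (forall x, 0 <= g x) ->
  cylf As (f \+ g) = cylf As f \+ cylf As g.
Proof.
move=> + mf mg f0 g0; elim: As => [//|A As IH] /allm_cons [mA mAs] /=.
apply/funext => x; rewrite IH //= ge0_integralD //;
  try (by move=> y _; exact: cylf_ge0); try exact: cylf_meas.
by case: (indic01 A x) => ->; rewrite ?mul1e ?mul0e ?adde0.
Qed.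

Lemma cylf_scale As (f : S -> \bar R) (k : R) : allm As -> measurable_fun [set: S] f ->
  (forall x, 0 <= f x) -> (0 <= k)%R ->
  cylf As (fun x => k%:E * f x) = (fun x => k%:E * cylf As f x).
Proof.
move=> + mf f0 k0; elim: As => [//|A As IH] /allm_cons [mA mAs] /=.
apply/funext => x; rewrite IH // ge0_integralZl //;
  try (by move=> y _; exact: cylf_ge0); try exact: cylf_meas; try by rewrite lee_fin.
by rewrite muleCA.
Qed.

Lemma cylf_cvg As (f : (S -> \bar R)^nat) : allm As ->
  (forall m, measurable_fun [set: S] (f m)) -> (forall m x, 0 <= f m x) ->
  (forall x, nondecreasing_seq (f ^~ x)) ->
  forall x, cylf As (f m) x @[m --> \oo] --> cylf As (fun y => limn (f ^~ y)) x.
Proof.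
move=> + mf f0 ndf; elim: As => [|A As IH] /=.
  by move=> _ x; exact: ereal_nondecreasing_is_cvgn.
move=> /allm_cons [mA mAs] x.
have -> : \int[kappa x]_y cylf As (fun y0 => limn (f^~ y0)) y =
          \int[kappa x]_y limn (fun m => cylf As (f m) y).
  by apply: eq_integral => y _; rewrite (cvg_lim _ (IH mAs y)).
have H : \int[kappa x]_y cylf As (f m) y @[m --> \oo] -->
         \int[kappa x]_y limn (fun m => cylf As (f m) y).
  apply: cvg_monotone_convergence => //.
  - by move=> m; exact: cylf_meas.
  - by move=> m y _; exact: cylf_ge0.
  - move=> y _ m n mn; apply: cylf_le => //.
    by move=> z; exact: ndf.
case: (indic01 A x) => ->.
  by under eq_fun do rewrite mul1e; rewrite mul1e.
by under eq_fun do rewrite mul0e; rewrite mul0e; exact: cvg_cst.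
Qed.

End cylf.
Section runs.
Context {d : measure_display} {S : measurableType d} {R : realType}.
Variable kappa : R.-pker S ~> S.
Local Open Scope ereal_scope.

Lemma cyl_cylf As : cyl kappa As = cylf kappa As (fun _ => 1).
Proof. by rewrite -[in LHS](cats0 As) cylf_cat. Qed.

Lemma cyl_ge0 As x : 0 <= cyl kappa As x.
Proof. by rewrite cyl_cylf; apply: cylf_ge0. Qed.

Lemma cyl_meas As : allm As -> measurable_fun [set: S] (cyl kappa As).
Proof. by move=> h; rewrite cyl_cylf; apply: cylf_meas. Qed.

Lemma int_le1 (g : S -> \bar R) x : measurable_fun [set: S] g ->
  (forall y, 0 <= g y) -> (forall y, g y <= 1) -> \int[kappa x]_y g y <= 1.
Proof.
move=> mg g0 g1.
apply: le_trans (_ : \int[kappa x]_y (cst 1 y) <= 1).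
  apply: ge0_le_integral => //.
by rewrite integral_cst // prob_kernel mul1e.
Qed.

Lemma cyl_le1 As x : allm As -> cyl kappa As x <= 1.
Proof.
elim: As x => [//|A As IH] x /allm_cons [mA mAs] /=.
rewrite indicE; case: (x \in A); rewrite /= ?mul0e // mul1e; apply: int_le1.
- exact: cyl_meas.
- by move=> y; exact: cyl_ge0.
- by move=> y; exact: IH.
Qed.

Definition cyls (As : seq (set S)) : set (run S) :=
  [set r : run S | forall i, (i < size As)%N -> nth setT As i (r i)].

Lemma meas_coord n (A : set S) : measurable A ->
  measurable [set r : run S | A (r n)].
Proof.
move=> mA; apply: sub_gen_smallest; exists n => //.
by exists A => //; rewrite setTI.
Qed.

Lemma meas_cyls As : allm As -> measurable (cyls As).
Proof.
move=> h.
have -> : cyls As = \bigcap_(i in [set i | (i < size As)%N])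
                      [set r : run S | nth setT As i (r i)].
  by apply/seteqP; split => r /= H i; apply: H.
apply: bigcap_measurableType => i /= iA; apply: meas_coord.
by apply: h; exact: mem_nth.
Qed.

Lemma Pd_cyl (Pd : S -> probability (run S) R) As x :
  (forall s : S, is_run_measure kappa (\d_s) (Pd s)) -> allm As ->
  Pd x (cyls As) = cyl kappa As x.
Proof.
move=> hPd h; rewrite /cyls (hPd x As h) integral_dirac ?diracT ?mul1e //.
exact: cyl_meas.
Qed.

End runs.
Section more.
Context {d : measure_display} {S : measurableType d} {R : realType}.
Variable kappa : R.-pker S ~> S.
Local Open Scope ereal_scope.

Lemma allm_nseq n (A : set S) : measurable A -> @allm d S (nseq n A).
Proof. by move=> mA B; rewrite mem_nseq => /andP[_ /eqP ->]. Qed.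

Lemma allm_cat (As Bs : seq (set S)) : allm As -> allm Bs -> allm (As ++ Bs).
Proof. by move=> hA hB C; rewrite mem_cat => /orP[/hA|/hB]. Qed.

Lemma cyls_nseq n (A : set S) :
  cyls (nseq n A) = [set r : run S | forall i, (i < n)%N -> A (r i)].
Proof.
apply/seteqP; split => r /= H i; rewrite ?size_nseq => hi.
  by have := H i; rewrite size_nseq nth_nseq hi; apply.
by rewrite nth_nseq hi; apply: H.
Qed.

Lemma fin_P (P : probability (run S) R) (A : set (run S)) : measurable A ->
  P A \is a fin_num.
Proof.
move=> mA; rewrite ge0_fin_numE //.
by apply: le_lt_trans (probability_le1 P mA) _; exact: ltey.
Qed.

Lemma meas_Fev (A : set S) : measurable A -> measurable (Fev A : set (run S)).
Proof.
move=> mA; have -> : Fev A = \bigcup_n [set r : run S | A (r n)].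
  by apply/seteqP; split => r /=; [case=> n Hn; exists n|case=> n _ Hn; exists n].
by apply: bigcupT_measurable => n; exact: meas_coord.
Qed.

Lemma cyl_single (A : set S) : cyl kappa [:: A] = fun y => (\1_A y)%:E.
Proof.
apply/funext => y /=.
by rewrite integral_cst // prob_kernel mul1e mule1.
Qed.

Lemma cyl_cat_le (As Bs : seq (set S)) y : allm As -> allm Bs ->
  cyl kappa (As ++ Bs) y <= cyl kappa As y.
Proof.
move=> hA hB; rewrite cylf_cat (cyl_cylf kappa As).
apply: cylf_le => //.
- exact: cyl_meas.
- by move=> z; exact: cyl_ge0.
- by move=> z; exact: cyl_le1.
Qed.

End more.
Unset Implicit Arguments.
Theorem mainTheorem6 (d : measure_display) (S : measurableType d) (R : realType)
    (kappa : R.-pker S ~> S) (Pd : S -> probability (run S) R) (B : set S) :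
  (forall s : S, is_run_measure kappa (\d_s) (Pd s)) ->
  measurable B ->
  measurable (Btilde Pd B) ->
  globally_coarse Pd B ->
  decisive kappa Pd B.
Proof.
move=> hPd mB mBt [p [p0 hp]] mu P hP.
set nB := ~` B.
set C := ~` Btilde Pd B.
set D := nB `&` C.
have mnB : measurable nB by apply: measurableC.
have mD : measurable D by apply: measurableI => //; exact: measurableC.
pose c m x := (\int[kappa x]_y cyl kappa (nseq m nB) y)%E.
have c0 m x : (0 <= c m x)%E by apply: integral_ge0 => y _; exact: cyl_ge0.
have c1 m x : (c m x <= 1)%E.
  apply: int_le1; first exact/cyl_meas/allm_nseq.
    by move=> y; exact: cyl_ge0.
  by move=> y; exact/cyl_le1/allm_nseq.
have mc m : measurable_fun [set: S] (c m).
  apply: measurable_fun_integral_kernel.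
  - by move=> U mU; exact: measurable_kernel.
  - by move=> y; exact: cyl_ge0.
  - exact/cyl_meas/allm_nseq.
have cfin m x : c m x \is a fin_num.
  by rewrite ge0_fin_numE // (le_lt_trans (c1 m x)) // ltey.
have cdec m x : (c m.+1 x <= c m x)%E.
  apply: ge0_le_integral => //.
  - by move=> y _; exact: cyl_ge0.
  - exact/cyl_meas/allm_nseq.
  - exact/cyl_meas/allm_nseq.
  - by move=> y _; rewrite -addn1 nseqD; apply: cyl_cat_le; exact: allm_nseq.
pose e m x := ((\1_D x)%:E * (1 - c m x))%E.
have e0 m x : (0 <= e m x)%E.
  by apply: mule_ge0; [rewrite lee_fin|rewrite subre_ge0].
have me m : measurable_fun [set: S] (e m).
  apply: emeasurable_funM; first by apply/measurable_EFinP; exact: measurable_indic.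
  by apply: emeasurable_funB => //; exact: measurable_cst.
have nde x : nondecreasing_seq (e ^~ x).
  apply/nondecreasing_seqP => m; apply: lee_wpmul2l; first by rewrite lee_fin.
  by apply: leeB => //.
have elim x : (p%:E * (\1_D x)%:E <= limn (e ^~ x))%E.
  rewrite indicE; have [xD|xD] := boolP (x \in D); last first.
    rewrite mule0; apply: lime_ge; first exact: ereal_nondecreasing_is_cvgn.
    by apply: nearW => m; exact: e0.
  rewrite mule1.
  pose F m := ~` (cyls (nseq m.+1 nB) : set (run S)).
  have mF m : measurable (F m) by apply: measurableC; apply: meas_cyls; exact: allm_nseq.
  have eF m : e m x = Pd x (F m).
    rewrite probability_setC; last by apply: meas_cyls; exact: allm_nseq.
    rewrite (Pd_cyl _ hPd); last exact: allm_nseq.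
    rewrite /e /= indicE xD mul1e indicE (_ : x \in nB) ?mul1e //; move: xD; rewrite !inE; by case.
  have UF : \bigcup_m F m = Fev B.
    apply/seteqP; split => r /=.
      case=> m _; rewrite /F cyls_nseq /= => /existsNP [i] /not_implyP [_].
      by move=> /contrapT Bri; exists i.
    case=> n Brn; exists n => //; rewrite /F cyls_nseq /= => H.
    by apply: (H n) => //.
  have ndF : nondecreasing_seq F.
    move=> m n mn; apply/subsetPset => r; rewrite /F !cyls_nseq /= => H1 H2; apply: H1 => i im; apply: H2.
    by apply: leq_trans im _; rewrite ltnS.
  have hcv : (Pd x \o F) @ \oo --> Pd x (Fev B).
    by rewrite -UF; apply: nondecreasing_cvg_mu => //; rewrite UF; exact: meas_Fev.
  have -> : e ^~ x = Pd x \o F by apply/funext => m; rewrite eF.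
  rewrite (cvg_lim _ hcv) //.
  case: (hp x) => // H0; exfalso; move: xD; rewrite inE => -[_]; apply.
  exact: H0.
pose Bad := ~` (Fev B `|` Fev (Btilde Pd B)).
have mBad : measurable Bad.
  by apply: measurableC; apply: measurableU; exact: meas_Fev.
have mA1 N : measurable (cyls (nseq N nB)) by apply: meas_cyls; exact: allm_nseq.
have key N : (p%:E * P Bad <= P (cyls (nseq N.+1 nB) `&` Fev B))%E.
  pose T := nseq N nB.
  have hT : allm T by exact: allm_nseq.
  have hTD : allm (T ++ [:: D]) by apply: allm_cat => //; by move=> A; rewrite inE => /eqP ->.
  have BadG : Bad `<=` cyls (T ++ [:: D]).
    move=> r /= Hr i; rewrite size_cat size_nseq addn1 ltnS => iN.
    rewrite nth_cat size_nseq; case: ltnP => hi.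
      rewrite nth_nseq hi => Br; apply: Hr; left; by exists i.
    have -> : i = N by apply/eqP; rewrite eqn_leq iN hi.
    rewrite subnn /=; split.
      move=> Br; apply: Hr; left; by exists N.
    move=> Bt; apply: Hr; right; by exists N.
  have PG : P (cyls (T ++ [:: D])) = (\int[mu]_x cylf kappa T (fun y => (\1_D y)%:E) x)%E.
    by rewrite /cyls (hP _ hTD) cylf_cat cyl_single.
  pose L y := limn (e ^~ y).
  have mL : measurable_fun [set: S] L.
    apply: (@emeasurable_fun_cvg _ _ _ _ e) => // y _.
    exact: ereal_nondecreasing_is_cvgn.
  have L0 y : (0 <= L y)%E.
    apply: lime_ge; first exact: ereal_nondecreasing_is_cvgn.
    by apply: nearW => m; exact: e0.
  have mI (A : set S) : measurable A ->
      measurable_fun [set: S] (fun y => (\1_A y)%:E : \bar R).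
    by move=> mA; apply/measurable_EFinP; exact: measurable_indic.
  have I0 (A : set S) y : (0 <= (\1_A y)%:E :> \bar R)%E by rewrite lee_fin.
  have step1 : (p%:E * P Bad <= \int[mu]_x cylf kappa T L x)%E.
    apply: (@le_trans _ _ (p%:E * P (cyls (T ++ [:: D])))%E).
      apply: lee_wpmul2l; first by rewrite lee_fin ltW.
      by apply: le_measure => //; rewrite inE //; exact: meas_cyls.
    rewrite PG -ge0_integralZl //; first last.
    - by rewrite lee_fin ltW.
    - by move=> y _; apply: cylf_ge0.
    - by apply: cylf_meas => //; exact: mI.
    apply: ge0_le_integral => //.
    - by move=> y _; apply: mule_ge0; [rewrite lee_fin ltW|apply: cylf_ge0].
    - apply: emeasurable_funM; first exact: measurable_cst.
      by apply: cylf_meas => //; exact: mI.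
    - exact: cylf_meas.
    move=> y _.
    have := cylf_scale kappa hT (mI D mD) (I0 D) (ltW p0) => /(congr1 (fun f => f y)) /= <-.
    apply: cylf_le => //.
    - by apply: emeasurable_funM; [exact: measurable_cst|exact: mI].
    - by move=> z; apply: mule_ge0; [rewrite lee_fin ltW|].
  have ndI : forall z, nondecreasing_seq (fun m => cylf kappa T (e m) z).
    by move=> z m n mn; apply: cylf_le => // w; exact: nde.
  have step2 : (\int[mu]_x cylf kappa T L x =
                limn (fun m => \int[mu]_x cylf kappa T (e m) x))%E.
    rewrite -(@monotone_convergence _ _ _ mu setT measurableT
      (fun m => cylf kappa T (e m))).
    - apply: eq_integral => y _; apply/esym/cvg_lim => //; exact: cylf_cvg.
    - by move=> m; exact: cylf_meas.
    - by move=> m y _; exact: cylf_ge0.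
    - by move=> y _; exact: ndI.
  have step3 m : (\int[mu]_x cylf kappa T (e m) x <=
                  P (cyls (nseq N.+1 nB) `&` Fev B))%E.
    pose h1 y := ((\1_nB y)%:E * c m y)%E.
    pose h2 y := ((\1_nB y)%:E * (1 - c m y))%E.
    have h10 y : (0 <= h1 y)%E by apply: mule_ge0.
    have h20 y : (0 <= h2 y)%E by apply: mule_ge0; [|rewrite subre_ge0].
    have mh1 : measurable_fun [set: S] h1 by apply: emeasurable_funM; [exact: mI|].
    have mh2 : measurable_fun [set: S] h2.
      apply: emeasurable_funM; first exact: mI.
      by apply: emeasurable_funB => //; exact: measurable_cst.
    have PA1 : P (cyls (nseq N.+1 nB)) =
        (\int[mu]_x cylf kappa T h1 x + \int[mu]_x cylf kappa T h2 x)%E.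
      rewrite -ge0_integralD //; first last.
      - exact: cylf_meas.
      - by move=> y _; exact: cylf_ge0.
      - exact: cylf_meas.
      - by move=> y _; exact: cylf_ge0.
      rewrite /cyls (hP _ (allm_nseq mnB)) -addn1 nseqD cylf_cat cyl_single.
      apply: eq_integral => y _.
      have := cylf_add kappa hT mh1 mh2 h10 h20 => /(congr1 (fun f => f y)) /= <-.
      congr (cylf kappa T _ y); apply/funext => z; rewrite /h1 /h2 /=.
      rewrite indicE; case: (z \in nB); rewrite /= ?mul1e ?mul0e ?adde0 //.
      by rewrite addeC subeK.
    have PA2 : P (cyls (nseq (N + m.+1) nB)) = (\int[mu]_x cylf kappa T h1 x)%E.
      by rewrite /cyls (hP _ (allm_nseq mnB)) nseqD cylf_cat.
    have le1 : (\int[mu]_x cylf kappa T (e m) x <= \int[mu]_x cylf kappa T h2 x)%E.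
      apply: ge0_le_integral => //.
      - by move=> y _; exact: cylf_ge0.
      - exact: cylf_meas.
      - exact: cylf_meas.
      move=> y _; apply: cylf_le => // z.
      rewrite /e /h2 !indicE; case: (boolP (z \in D)) => zD.
        by move: (zD); rewrite inE => -[/mem_set ->].
      by rewrite /= mul0e; exact: h20.
    have le2 : (P (cyls (nseq N.+1 nB)) <= P (cyls (nseq (N + m.+1) nB)) +
                 P (cyls (nseq N.+1 nB) `&` Fev B))%E.
      apply: le_trans (measureU2 _ _ _); last 2 first.
      - exact: mA1.
      - by apply: measurableI => //; exact: meas_Fev.
      apply: le_measure; rewrite ?inE //.
      - by apply: measurableU => //; apply: measurableI => //; exact: meas_Fev.
      move=> r A1r; case: (EM (Fev B r)) => Fr; first by right.
      left; move: A1r; rewrite !cyls_nseq /= => _ i _ Bi; apply: Fr; by exists i.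
    move: le2; rewrite PA1 PA2 leeD2lE; last by rewrite -PA2; exact: fin_P.
    exact: le_trans le1.
  apply: le_trans step1 _; rewrite step2; apply: lime_le.
    apply: ereal_nondecreasing_is_cvgn => m n mn; apply: ge0_le_integral => //.
    - by move=> y _; exact: cylf_ge0.
    - exact: cylf_meas.
    - exact: cylf_meas.
    by move=> y _; exact: ndI.
  by apply: nearW => m; exact: step3.
pose u N := P (cyls (nseq N.+1 nB) `&` Fev B).
have mu_ N : measurable (cyls (nseq N.+1 nB) `&` Fev B).
  by apply: measurableI => //; exact: meas_Fev.
have u0 : u @ \oo --> 0%E.
  have capE : \bigcap_N (cyls (nseq N.+1 nB) `&` Fev B) = set0.
    apply/seteqP; split => r //= H.
    have [_ [n Bn]] := H 0%N I.
    have := H n I; move=> [+ _]; rewrite -[nB :: _]/(nseq n.+1 nB) cyls_nseq => /(_ n (ltnSn n)); exact.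
  rewrite -(measure0 P) -capE.
  apply: nonincreasing_cvg_mu => //.
  - by apply: le_lt_trans (probability_le1 P (mu_ 0%N)) (ltey _).
  - by apply: bigcap_measurableType => N _; exact: mu_.
  - move=> m n mn; apply/subsetPset => r; rewrite !cyls_nseq => -[H Fr].
    by split => // i im; apply: H; exact: leq_trans im _.
have pBad : (p%:E * P Bad <= 0)%E.
  rewrite -(cvg_lim _ u0) //; apply: lime_ge; first by apply/cvg_ex; exists 0%E.
  by apply: nearW.
have PBad0 : P Bad = 0%E.
  apply/eqP; rewrite eq_le measure_ge0 andbT -(@pmule_rle0 _ p%:E) //.
rewrite -[Fev B `|` _]setCK (probability_setC P mBad) PBad0.
by rewrite sube0.
Qed.
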